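(* For every ranking $R\in\mathcal{R}$ there exists a matrix $W\in\mathbb{R}^{m\times n}_{\ge0}$ such that for every ranking $R'\in\mathcal{R}$ with $R'\ne R$, $\langle R',W\rangle\le\langle R,W\rangle\cdot(1-\frac1n)$.
   Context: $\mathcal{R}$ is the set of rankings: matrices $R\in\{0,1\}^{m\times n}$ with $\sum_{j=1}^n R_{ij}\le 1$ for every item $i\in[m]$ and $\sum_{i=1}^m R_{ij}=1$ for every position $j\in[n]$; $\langle R,W\rangle=\sum_{i,j}R_{ij}W_{ij}$. *)

(* Defs.v *)
From mathcomp Require Import all_boot all_order all_algebra.
From mathcomp Require Import reals.
Set Implicit Arguments. Unset Strict Implicit. Unset Printing Implicit Defensive.
Import Order.TTheory GRing.Theory Num.Theory.
Local Open Scope ring_scope.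

(* A ranking: a 0/1 matrix with each item (row) in at most one position
   and each position (column) filled by exactly one item. *)
Definition is_ranking (R : realType) (m n : nat) (A : 'M[R]_(m, n)) : Prop :=
  [/\ (forall i j, A i j = 0 \/ A i j = 1),
      (forall i : 'I_m, \sum_(j < n) A i j <= 1) &
      (forall j : 'I_n, \sum_(i < m) A i j = 1)].

Definition frob (R : realType) (m n : nat) (A W : 'M[R]_(m, n)) : R :=
  \sum_(i < m) \sum_(j < n) A i j * W i j.

(* Main.v *)
Require Import Defs.
From mathcomp Require Import all_boot all_order all_algebra.
From mathcomp Require Import reals.
Import Order.TTheory GRing.Theory Num.Theory.
Local Open Scope ring_scope.

Lemma col_le1 (R : realType) (m n : nat) (A B : 'M[R]_(m, n)) j :
  is_ranking A -> is_ranking B -> \sum_(i < m) A i j * B i j <= 1.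
Proof.
move=> [A01 _ Ac] [B01 _ Bc].
rewrite -(Ac j); apply: ler_sum => i _.
have [->|->] := B01 i j; last by rewrite mulr1.
have [->|->] := A01 i j; by rewrite ?mulr0.
Qed.

Lemma col_le0 (R : realType) (m n : nat) (A B : 'M[R]_(m, n)) i j :
  is_ranking A -> is_ranking B -> A i j = 1 -> B i j = 0 ->
  \sum_(k < m) A k j * B k j <= 0.
Proof.
move=> [A01 _ Ac] [B01 _ Bc] Ha Hb.
rewrite (bigD1 i) //= Hb mulr0 add0r.
have : \sum_(k < m | k != i) A k j = 0.
  by move: (Ac j); rewrite (bigD1 i) //= Ha -{2}[1]addr0 => /addrI.
move=> E; rewrite -[X in _ <= X]E; apply: ler_sum => k _.
have [->|->] := B01 k j; last by rewrite mulr1.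
by rewrite mulr0; have [->|->] := A01 k j.
Qed.

Theorem lemma7p3 (R : realType) (m n : nat) (Rk : 'M[R]_(m, n)) :
  is_ranking Rk ->
  exists W : 'M[R]_(m, n),
    (forall i j, 0 <= W i j) /\
    (forall Rk' : 'M[R]_(m, n), is_ranking Rk' -> Rk' <> Rk ->
       frob Rk' W <= frob Rk W * (1 - n%:R^-1)).
Proof.
move=> HR; exists Rk; split.
  move=> i j; case: HR => H _ _; by have [->|->] := H i j.
move=> R' HR' Hne.
have /existsP [i0 /existsP [j0 Hij]] : [exists i, exists j, R' i j != Rk i j].
  apply: contraT => H; exfalso; apply: Hne; apply/matrixP => i j; apply/eqP.
  move: H; rewrite negb_exists => /forallP /(_ i); rewrite negb_exists.
  by move=> /forallP /(_ j) /negPn.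
have c0 : \sum_(k < m) R' k j0 * Rk k j0 <= 0.
  case: (HR') => H01 _ _; case: (HR) => K01 _ _.
  have [h1|h1] := H01 i0 j0; have [k1|k1] := K01 i0 j0; rewrite h1 k1 in Hij.
  - by rewrite eqxx in Hij.
  - under eq_bigr do rewrite mulrC.
    by apply: (@col_le0 _ _ _ _ _ i0 j0).
  - by apply: (@col_le0 _ _ _ _ _ i0 j0).
  - by rewrite eqxx in Hij.
have RR : frob Rk Rk = n%:R.
  rewrite /frob exchange_big /=.
  transitivity (\sum_(j < n) (1 : R)); last by rewrite sumr_const card_ord.
  apply: eq_bigr => j _; case: HR => H _ Hc; rewrite -(Hc j).
  by apply: eq_bigr => i _; have [->|->] := H i j; rewrite ?mulr0 ?mulr1.
have n0 : (0 < n)%N by case: (n) (j0) => [[]|].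
rewrite RR mulrBr mulr1 mulfV ?pnatr_eq0 -?lt0n //.
rewrite /frob exchange_big /= (bigD1 j0) //=.
have Hn : (n%:R : R) = 1 + \sum_(j < n | j != j0) 1.
  by rewrite -[n in LHS]card_ord -sumr_const (bigD1 j0).
rewrite Hn [1 + _]addrC addrK -[X in _ <= X]add0r lerD //.
by apply: ler_sum => j _; apply: col_le1.
Qed.
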